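(* Assume there exists a $1$-perfect code in $H(q+1,q)$. Let $f$ be a $(b,c)$-coloring of $H(n,q)$ with main eigenvalue $\lambda$ such that the set of vertices of color $1$ can be partitioned into $k$-faces, and suppose $\lambda\le k(q-1)$. Then for every positive integer $r$ and all $t_1,\dots,t_r\in\{1,\dots,q\}$ there is a $\big(q^r(b+c)-t_1\cdots t_r c,\ t_1\cdots t_r c\big)$-coloring of $H\big(q^r n+(k(q-1)-\lambda)\frac{q^r-1}{q-1},\,q\big)$ with main eigenvalue $\lambda+k(q-1)(q^r-1)$.
   Context: The Hamming graph $H(n,q)$ has vertex set $\mathbb{Z}_q^n$, two vertices adjacent iff they differ in exactly one coordinate. A $k$-face is a set of vertices obtained by fixing $n-k$ coordinates and letting the other $k$ coordinates range over $\mathbb{Z}_q$. A $(b,c)$-coloring of $H(n,q)$ is a surjective map onto $\{1,2\}$ in which each color-1 vertex has exactly $b$ neighbours of color 2 and each color-2 vertex has exactly $c$ neighbours of color 1; its main eigenvalue is $n(q-1)-(b+c)$. A $1$-perfect code in $H(n,q)$ is a set $C$ of vertices such that every radius-$1$ Hamming ball contains exactly one element of $C$. *)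

(* Defs.v *)
From HB Require Import structures.
From mathcomp Require Import all_boot all_order all_algebra.
Set Implicit Arguments. Unset Strict Implicit. Unset Printing Implicit Defensive.

Definition hvert (n q : nat) := {ffun 'I_n -> 'I_q}.

Definition hadj (n q : nat) (x y : hvert n q) : bool :=
  #|[set i : 'I_n | x i != y i]| == 1.

Definition is_face (n q k : nat) (F : {set hvert n q}) : Prop :=
  exists (S : {set 'I_n}) (a : hvert n q),
    #|S| = k /\ F = [set x : hvert n q | [forall i, (i \notin S) ==> (x i == a i)]].

Definition is_coloring (n q b c : nat) (f : hvert n q -> nat) : Prop :=
  (forall x, f x = 1 \/ f x = 2) /\
  (exists x, f x = 1) /\ (exists y, f y = 2) /\
  (forall x, f x = 1 -> #|[set y | hadj x y & f y == 2]| = b) /\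
  (forall x, f x = 2 -> #|[set y | hadj x y & f y == 1]| = c).

Definition main_eigenvalue (n q b c : nat) : int :=
  (n * (q - 1))%:Z - (b + c)%:Z.

Definition color1_face_partition (n q k : nat) (f : hvert n q -> nat) : Prop :=
  exists P : {set {set hvert n q}},
    partition P [set x | f x == 1] /\ (forall F, F \in P -> is_face k F).

Definition perfect_code (n q : nat) (C : {set hvert n q}) : Prop :=
  forall x : hvert n q, #|[set y in C | (y == x) || hadj x y]| = 1.

(* Main.v *)
Require Import Defs.
From HB Require Import structures.
From mathcomp Require Import all_boot all_order all_algebra.
From mathcomp Require Import zify.
Import GRing.Theory Num.Theory.
Set Implicit Arguments. Unset Strict Implicit. Unset Printing Implicit Defensive.

Definition dset (I : finType) q (x y : {ffun I -> 'I_q}) := [set i | x i != y i].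
Definition adjI (I : finType) q (x y : {ffun I -> 'I_q}) := #|dset x y| == 1.
Definition upd (I : finType) q (x : {ffun I -> 'I_q}) (i : I) (v : 'I_q) :
  {ffun I -> 'I_q} := [ffun j => if j == i then v else x j].
Definition colI (I : finType) q (b c : nat) (f : {ffun I -> 'I_q} -> nat) : Prop :=
  (forall x, f x = 1 \/ f x = 2) /\
  (exists x, f x = 1) /\ (exists y, f y = 2) /\
  (forall x, f x = 1 -> #|[set y | adjI x y & f y == 2]| = b) /\
  (forall x, f x = 2 -> #|[set y | adjI x y & f y == 1]| = c).

Lemma colI_hv n q b c (f : hvert n q -> nat) : is_coloring b c f <-> colI b c f.
Proof. by []. Qed.

Lemma updE (I : finType) q (x : {ffun I -> 'I_q}) i v j :
  upd x i v j = if j == i then v else x j.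
Proof. by rewrite ffunE. Qed.

Lemma upd_same (I : finType) q (x : {ffun I -> 'I_q}) i : upd x i (x i) = x.
Proof. by apply/ffunP=> j; rewrite updE; case: eqP => [->|]. Qed.

Lemma upd_upd (I : finType) q (x : {ffun I -> 'I_q}) i v w :
  upd (upd x i v) i w = upd x i w.
Proof. by apply/ffunP=> j; rewrite !updE; case: eqP. Qed.

Lemma dset_upd (I : finType) q (x : {ffun I -> 'I_q}) i v :
  v != x i -> dset x (upd x i v) = [set i].
Proof.
move=> hv; apply/setP=> j; rewrite !inE updE.
by case: (j =P i) => [->|_]; [rewrite eq_sym hv | rewrite eqxx].
Qed.

Lemma adj_upd (I : finType) q (x : {ffun I -> 'I_q}) i v :
  v != x i -> adjI x (upd x i v).
Proof. by move=> hv; rewrite /adjI dset_upd // cards1. Qed.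

Lemma adjP (I : finType) q (x y : {ffun I -> 'I_q}) :
  adjI x y -> exists2 i, y i != x i & y = upd x i (y i).
Proof.
rewrite /adjI => /cards1P [i hi]; exists i.
  by move: (set11 i); rewrite -hi inE eq_sym.
apply/ffunP=> j; rewrite updE; case: eqP => [->//|/eqP hj].
have : j \notin dset x y by rewrite hi inE.
by rewrite inE negbK => /eqP.
Qed.

Lemma card_cond (T : finType) (Q : pred T) : #|[set v | Q v]| = \sum_v (Q v : nat).
Proof. by rewrite -sum1_card big_mkcond /=; apply: eq_bigr => v _; rewrite inE. Qed.

Lemma card_nbr (I : finType) q (x : {ffun I -> 'I_q}) (P : pred {ffun I -> 'I_q}) :
  #|[set y | adjI x y & P y]| =
  \sum_i #|[set v | (v != x i) && P (upd x i v)]|.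
Proof.
set A := [set p : I * 'I_q | (p.2 != x p.1) && P (upd x p.1 p.2)].
have -> : [set y | adjI x y & P y] = [set upd x p.1 p.2 | p in A].
  apply/setP=> y; rewrite inE; apply/andP/imsetP.
    move=> [/adjP [i hi hy] hP]; exists (i, y i) => //.
    by rewrite inE /= hi -hy.
  move=> [[i v]]; rewrite inE /= => /andP [hv hP] ->; split => //.
  exact: adj_upd.
rewrite card_in_imset.
  rewrite card_cond [RHS](eq_bigr (fun i => \sum_v ((v != x i) && P (upd x i v) : nat))); last first.
    by move=> i _; rewrite card_cond.
  by rewrite pair_bigA /=; apply: eq_bigr.
move=> [i v] [i' v']; rewrite !inE /= => /andP [hv _] /andP [hv' _] he.
have := congr1 (fun z : {ffun I -> 'I_q} => z i) he; rewrite /= !updE eqxx.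
case: (i =P i') => [<- -> //| _ e]; by rewrite e eqxx in hv.
Qed.

Lemma col_bij (I J : finType) q b c (g : {ffun I -> 'I_q} -> nat) (e : J -> I) (e' : I -> J) :
  cancel e e' -> cancel e' e -> colI b c g ->
  colI b c (fun Y : {ffun J -> 'I_q} => g [ffun i => Y (e' i)]).
Proof.
move=> ee' e'e [h12 [[x1 hx1] [[x2 hx2] [hb hc]]]].
pose Phi := fun Y : {ffun J -> 'I_q} => [ffun i => Y (e' i)].
pose Psi := fun X : {ffun I -> 'I_q} => [ffun j => X (e j)].
have PhiK : cancel Psi Phi by move=> X; apply/ffunP=> i; rewrite !ffunE e'e.
have PsiK : cancel Phi Psi by move=> Y; apply/ffunP=> j; rewrite !ffunE ee'.
have adjE Y Z : adjI (Phi Y) (Phi Z) = adjI Y Z.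
  rewrite /adjI; congr (_ == _).
  have -> : dset (Phi Y) (Phi Z) = e @: dset Y Z.
    apply/setP=> i; rewrite inE !ffunE; apply/idP/imsetP.
      by move=> h; exists (e' i); rewrite ?inE ?e'e.
    by move=> [j]; rewrite inE => h ->; rewrite ee'.
  by rewrite card_imset //; exact: can_inj ee'.
have cntE Y k : #|[set Z | adjI Y Z & g (Phi Z) == k]| =
                #|[set X | adjI (Phi Y) X & g X == k]|.
  have -> : [set X | adjI (Phi Y) X & g X == k] = Phi @: [set Z | adjI Y Z & g (Phi Z) == k].
    apply/setP=> X; rewrite inE; apply/idP/imsetP.
      move=> h; exists (Psi X); last by rewrite PhiK.
      by rewrite inE -(adjE Y (Psi X)) !PhiK.
    by move=> [Z]; rewrite inE => h ->; rewrite adjE.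
  by rewrite card_imset //; exact: can_inj PsiK.
split; first by move=> Y; exact: h12.
split; first by exists (Psi x1); rewrite /= -/(Phi _) PhiK.
split; first by exists (Psi x2); rewrite /= -/(Phi _) PhiK.
split=> Y hY.
  by rewrite cntE; apply: hb.
by rewrite cntE; apply: hc.
Qed.

Lemma col_transport (I J : finType) q b c (g : {ffun I -> 'I_q} -> nat) :
  #|I| = #|J| -> colI b c g -> exists g' : {ffun J -> 'I_q} -> nat, colI b c g'.
Proof.
move=> hIJ hg.
pose e := fun j : J => enum_val (cast_ord (esym hIJ) (enum_rank j)).
pose e' := fun i : I => enum_val (cast_ord hIJ (enum_rank i)).
have ee' : cancel e e' by move=> j; rewrite /e /e' enum_valK cast_ordKV enum_rankK.
have e'e : cancel e' e by move=> i; rewrite /e /e' enum_valK cast_ordK enum_rankK.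
by eexists; apply: (col_bij ee' e'e hg).
Qed.

Definition G1 q (sg : {ffun 'I_q -> 'I_q} -> 'I_q) :=
  forall (x : {ffun 'I_q -> 'I_q}) (a v : 'I_q), sg (upd x a v) = sg x -> v = x a.
Definition G3 q (sg tu : {ffun 'I_q -> 'I_q} -> 'I_q) :=
  forall (x : {ffun 'I_q -> 'I_q}) (a a' v v' : 'I_q), a != a' -> v != x a -> v' != x a' ->
    sg (upd x a v) = sg (upd x a' v') -> tu (upd x a v) != tu (upd x a' v').

Lemma block_count q (sg tu : {ffun 'I_q -> 'I_q} -> 'I_q) (x : {ffun 'I_q -> 'I_q})
  (s : 'I_q) (Q : pred 'I_q) :
  G1 sg -> G3 sg tu -> s != sg x ->
  \sum_a #|[set v | [&& v != x a, sg (upd x a v) == s & Q (tu (upd x a v))]]|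
  = #|[set u | Q u]|.
Proof.
move=> g1 g3 hs.
have inj a : injective (fun v => sg (upd x a v)).
  move=> v v' /= e; have := g1 (upd x a v) a v'.
  by rewrite upd_upd e updE eqxx => ->.
have ex a : exists v, sg (upd x a v) = s.
  have := inj_card_onto (inj a) (leqnn _) s.
  by move/codomP => [v ->]; exists v.
pose va a := odflt (x a) [pick v | sg (upd x a v) == s].
have hva a : sg (upd x a (va a)) = s.
  rewrite /va; case: pickP => [v /eqP //|h].
  by have [v hv] := ex a; have := h v; rewrite hv eqxx.
have vane a : va a != x a.
  by apply/eqP => e; move: (hva a); rewrite e upd_same => e'; rewrite e' eqxx in hs.
have cardE a : #|[set v | [&& v != x a, sg (upd x a v) == s & Q (tu (upd x a v))]]|
               = Q (tu (upd x a (va a))).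
  have -> : [set v | [&& v != x a, sg (upd x a v) == s & Q (tu (upd x a v))]]
            = if Q (tu (upd x a (va a))) then [set va a] else set0.
    apply/setP=> v; rewrite inE; case: (boolP (v == va a)) => [/eqP ->|hv].
      by rewrite vane hva eqxx /=; case: ifP; rewrite ?inE ?eqxx.
    have -> : (sg (upd x a v) == s) = false.
      by apply/negbTE; apply: contra hv => /eqP e; apply/eqP/(inj a); rewrite /= e hva.
    by rewrite andbF; case: ifP; rewrite ?inE ?(negbTE hv).
  by case: ifP; rewrite ?cards1 ?cards0.
rewrite (eq_bigr _ (fun a _ => cardE a)).
pose h a := tu (upd x a (va a)).
have hinj : injective h.
  move=> a a'; rewrite /h => e; apply/eqP; apply/negPn/negP => ne.
  by have := g3 x a a' (va a) (va a') ne (vane a) (vane a'); rewrite !hva e eqxx => /(_ erefl).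
rewrite -(card_preimset [set u | Q u] hinj) card_cond.
by apply: eq_bigr => a _; rewrite inE.
Qed.

Lemma dset_sym (I : finType) q (x y : {ffun I -> 'I_q}) : dset x y = dset y x.
Proof. by apply/setP=> i; rewrite !inE eq_sym. Qed.

Lemma dset0 (I : finType) q (x y : {ffun I -> 'I_q}) : dset x y = set0 -> x = y.
Proof.
move=> h; apply/ffunP=> i; apply/eqP; apply/negPn/negP => hi.
have : i \in dset x y by rewrite inE.
by rewrite h inE.
Qed.

Lemma pc_dist p (C : {set {ffun 'I_(p.+3) -> 'I_(p.+2)}}) (c c' : {ffun 'I_(p.+3) -> 'I_(p.+2)}) j1 j2 :
  perfect_code C -> c \in C -> c' \in C ->
  (forall i, i != j1 -> i != j2 -> c i = c' i) -> c = c'.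
Proof.
move=> pc hc hc' h; apply/eqP; apply/negPn/negP => ne.
have ball2 : forall x, ((c == x) || adjI x c) -> ((c' == x) || adjI x c') -> False.
  move=> x h1 h2; have := pc x; set B := [set y in C | _].
  have : [set c; c'] \subset B.
    by apply/subsetP => y; rewrite !inE => /orP [] /eqP ->; rewrite ?hc ?hc' /= ?h1 ?h2.
  by move/subset_leq_card; rewrite cards2 ne => le e; rewrite e in le.
have [i hi] : exists i, c i != c' i.
  case: (pickP (fun i => c i != c' i)) => [i hi'|hn]; first by exists i.
  move/eqP: ne; case; apply/ffunP => i; apply/eqP; exact: (negbFE (hn i)).
pose w := upd c i (c' i).
have hw1 : adjI w c by rewrite /adjI dset_sym dset_upd ?cards1 // eq_sym.
apply: (ball2 w); first by rewrite hw1 orbT.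
case: (boolP (c' == w)) => //= hcw.
have hij : (i == j1) || (i == j2).
  by apply/negPn/negP; rewrite negb_or => /andP [h1 h2]; rewrite (h i h1 h2) eqxx in hi.
pose k := if i == j1 then j2 else j1.
have sub : dset w c' \subset [set k].
  apply/subsetP=> l; rewrite !inE updE; case: (l =P i) => [->|/eqP hl]; first by rewrite eqxx.
  move=> hd; have hd' : c l != c' l by [].
  have : (l == j1) || (l == j2).
    by apply/negPn/negP; rewrite negb_or => /andP [h1 h2]; rewrite (h l h1 h2) eqxx in hd'.
  move=> hl12; rewrite /k; case: (i =P j1) => [e1|/eqP n1].
    by move: hl12; rewrite -e1 (negbTE hl).
  have e2 : i == j2 by move: hij; rewrite (negbTE n1).
  by move: hl12; rewrite -(eqP e2) (negbTE hl) orbF.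
have := subset_leq_card sub; rewrite cards1 /adjI.
have : #|dset w c'| != 0.
  rewrite cards_eq0; apply/negP => /eqP /dset0 e; by rewrite e eqxx in hcw.
by case: #|dset w c'| => [|[|]].
Qed.

Lemma adjI_sym (I : finType) q (x y : {ffun I -> 'I_q}) : adjI x y = adjI y x.
Proof. by rewrite /adjI dset_sym. Qed.

Lemma card_sum_in (T : finType) (A : {set T}) (P : pred T) :
  #|[set y in A | P y]| = \sum_(y in A) (P y : nat).
Proof.
rewrite -sum1_card big_mkcond [RHS]big_mkcond /=; apply: eq_bigr => y _.
by rewrite inE; case: (y \in A).
Qed.

Lemma nbr_total (I : finType) q (y : {ffun I -> 'I_q}) :
  #|[set x | adjI y x]| = #|I| * q.-1.
Proof.
have -> : [set x | adjI y x] = [set x | adjI y x & predT x] by apply/setP=> x; rewrite !inE andbT.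
rewrite card_nbr -sum_nat_const; apply: eq_bigr => i _.
have -> : [set v | (v != y i) && predT (upd y i v)] = [set~ y i] by apply/setP=> v; rewrite !inE andbT.
by rewrite cardsC1 card_ord.
Qed.

Lemma ball_card (I : finType) q (y : {ffun I -> 'I_q}) :
  #|[set x | (y == x) || adjI x y]| = 1 + #|I| * q.-1.
Proof.
have -> : [set x | (y == x) || adjI x y] = y |: [set x | adjI y x].
  by apply/setP=> x; rewrite !inE adjI_sym eq_sym.
rewrite cardsU1 nbr_total inE /adjI.
have -> : dset y y = set0 by apply/setP=> i; rewrite !inE eqxx.
by rewrite cards0.
Qed.

Lemma pc_card p (C : {set {ffun 'I_(p.+3) -> 'I_(p.+2)}}) :
  perfect_code C -> #|C| = (p.+2) ^ (p.+1).
Proof.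
move=> pc.
have e1 : \sum_(x : {ffun 'I_(p.+3) -> 'I_(p.+2)}) #|[set y in C | (y == x) || adjI x y]|
          = (p.+2) ^ (p.+3).
  rewrite (eq_bigr (fun _ => 1)); last by move=> x _; exact: pc.
  by rewrite sum1_card card_ffun !card_ord.
have e2 : \sum_(x : {ffun 'I_(p.+3) -> 'I_(p.+2)}) #|[set y in C | (y == x) || adjI x y]|
          = #|C| * (p.+2) ^ 2.
  rewrite (eq_bigr (fun x => \sum_(y in C) (((y == x) || adjI x y) : nat))); last first.
    by move=> x _; rewrite card_sum_in.
  rewrite exchange_big /= -sum1_card big_distrl /=; apply: eq_bigr => y _.
  rewrite mul1n -card_cond ball_card card_ord; lia.
have : #|C| * (p.+2) ^ 2 = (p.+2) ^ p.+1 * (p.+2) ^ 2.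
  by rewrite -e2 e1 -expnD addn2.
by move/eqP; rewrite eqn_pmul2r ?expn_gt0 // => /eqP.
Qed.

Lemma ord_eq_inord (n : nat) (i : 'I_n.+1) k : k < n.+1 -> (i == inord k) = ((i : nat) == k).
Proof. move=> hk; apply/eqP/eqP => [->|<-]; [exact: inordK | exact: esym (inord_val i)]. Qed.

Lemma pc_prefix p (C : {set {ffun 'I_(p.+3) -> 'I_(p.+2)}}) :
  perfect_code C -> forall x : {ffun 'I_(p.+2) -> 'I_(p.+2)},
  exists2 c, c \in C & forall i : 'I_(p.+3), i < p.+1 -> c i = x (inord i).
Proof.
move=> pc x.
pose pf := fun c : {ffun 'I_(p.+3) -> 'I_(p.+2)} => [ffun i0 : 'I_(p.+1) => c (inord i0)].
have pfinj : {in C &, injective pf}.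
  move=> c c' hc hc' e; apply: (pc_dist (j1 := inord p.+1) (j2 := inord p.+2) pc hc hc').
  move=> i h1 h2.
  have hi : i < p.+1.
    move: h1 h2; rewrite !ord_eq_inord // => h1 h2.
    have := ltn_ord i; lia.
  have := congr1 (fun f : {ffun 'I_(p.+1) -> 'I_(p.+2)} => f (Ordinal hi)) e.
  rewrite /= !ffunE.
  have -> : inord (Ordinal hi) = i :> 'I_(p.+3) by apply/val_inj; rewrite /= inordK // ltnS ltnW // ltnW.
  by [].
have full : pf @: C = setT.
  apply/eqP; rewrite eqEcard subsetT /= cardsT card_ffun !card_ord.
  by rewrite card_in_imset // (pc_card pc).
have : [ffun i0 : 'I_(p.+1) => x (inord i0)] \in pf @: C by rewrite full inE.
move/imsetP=> [c hc e]; exists c => // i hi.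
have := congr1 (fun f : {ffun 'I_(p.+1) -> 'I_(p.+2)} => f (Ordinal hi)) e.
rewrite /= !ffunE.
have -> : inord (Ordinal hi) = i :> 'I_(p.+3) by apply/val_inj; rewrite /= inordK // ltnS ltnW // ltnW.
by [].
Qed.

Definition cw p (C : {set {ffun 'I_(p.+3) -> 'I_(p.+2)}}) (x : {ffun 'I_(p.+2) -> 'I_(p.+2)})
  : {ffun 'I_(p.+3) -> 'I_(p.+2)} :=
  odflt [ffun => ord0] [pick c in C | [forall i : 'I_(p.+3), (i < p.+1) ==> (c i == x (inord i))]].

Lemma cw_spec p (C : {set {ffun 'I_(p.+3) -> 'I_(p.+2)}}) (x : {ffun 'I_(p.+2) -> 'I_(p.+2)}) : perfect_code C ->
  @cw p C x \in C /\ forall i : 'I_(p.+3), i < p.+1 -> cw C x i = x (inord i).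
Proof.
move=> pc; rewrite /cw; case: pickP => [c /andP [hc /forallP h] | h] /=.
  by split => // i hi; move: (h i); rewrite hi => /eqP.
have [c hc hp] := pc_prefix pc x.
have := h c; rewrite hc /=; move/negbT/negP; case.
by apply/forallP => i; apply/implyP => hi; rewrite hp.
Qed.

Lemma cw_uniq p (C : {set {ffun 'I_(p.+3) -> 'I_(p.+2)}}) (x : {ffun 'I_(p.+2) -> 'I_(p.+2)}) (c : {ffun 'I_(p.+3) -> 'I_(p.+2)}) : perfect_code C -> c \in C ->
  (forall i : 'I_(p.+3), i < p.+1 -> c i = x (inord i)) -> c = @cw p C x.
Proof.
move=> pc hc hp; have [h1 h2] := cw_spec x pc.
apply: (pc_dist (j1 := inord p.+1) (j2 := inord p.+2) pc hc h1) => i n1 n2.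
move: n1 n2; rewrite !ord_eq_inord // => n1 n2.
have hi : i < p.+1 by have := ltn_ord i; lia.
by rewrite hp // h2.
Qed.

Definition addq p (a b : 'I_(p.+2)) : 'I_(p.+2) := inord ((a + b) %% p.+2).

Lemma addq_val p (a b : 'I_(p.+2)) : (addq a b : nat) = (a + b) %% p.+2.
Proof. by rewrite /addq inordK // ltn_pmod. Qed.

Lemma addq_inj_l p (a a' b : 'I_(p.+2)) : addq a b = addq a' b -> a = a'.
Proof.
move/(congr1 val) => /=; rewrite !addq_val => /eqP; rewrite eqn_modDr !modn_small //.
by move/eqP => e; apply: val_inj.
Qed.

Lemma addq_inj_r p (a b b' : 'I_(p.+2)) : addq a b = addq a b' -> b = b'.
Proof.
move/(congr1 val) => /=; rewrite !addq_val => /eqP; rewrite eqn_modDl !modn_small //.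
by move/eqP => e; apply: val_inj.
Qed.

Definition sgC p C (x : {ffun 'I_(p.+2) -> 'I_(p.+2)}) : 'I_(p.+2) :=
  addq (x (inord p.+1)) (@cw p C x (inord p.+1)).
Definition tuC p C (x : {ffun 'I_(p.+2) -> 'I_(p.+2)}) : 'I_(p.+2) :=
  @cw p C x (inord p.+2).

Lemma updL p (x : {ffun 'I_(p.+2) -> 'I_(p.+2)}) (a v : 'I_(p.+2)) k :
  k < p.+2 -> (a : nat) != k -> upd x a v (inord k) = x (inord k).
Proof.
move=> hk ha; rewrite updE; case: eqP => // e.
by move: ha; rewrite -e inordK // eqxx.
Qed.

Lemma G1_C p (C : {set {ffun 'I_(p.+3) -> 'I_(p.+2)}}) : perfect_code C -> G1 (@sgC p C).
Proof.
move=> pc x a v; rewrite /sgC.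
have [c1 c2] := cw_spec x pc.
case: (eqVneq (a : nat) p.+1) => [ea|na].
  have ea' : a = inord p.+1 by apply: val_inj; rewrite /= inordK.
  have -> : cw C (upd x a v) = cw C x.
    have [d1 d2] := cw_spec (upd x a v) pc.
    apply: cw_uniq => // i hi; rewrite d2 // updL //; [lia | ].
    by rewrite ea; rewrite ltn_neqAle in hi; case/andP: hi => hi _; rewrite eq_sym; lia.
  by rewrite {1}ea' updE eqxx ea' => /addq_inj_l.
have hL : upd x a v (inord p.+1) = x (inord p.+1) by apply: updL.
rewrite hL => /addq_inj_r e.
have ha : a < p.+1 by have := ltn_ord a; lia.
have [d1 d2] := cw_spec (upd x a v) pc.
have eq : cw C (upd x a v) = cw C x.
  apply: (pc_dist (j1 := inord a) (j2 := inord p.+2) pc d1 c1) => i n1 n2.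
  move: n1 n2; rewrite !ord_eq_inord //; last by lia.
  move=> n1 n2.
  case: (eqVneq (i : nat) p.+1) => [ei|ni].
    have -> : i = inord p.+1 by apply: val_inj; rewrite /= inordK.
    exact: e.
  have hi : i < p.+1 by have := ltn_ord i; lia.
  by rewrite d2 // c2 // updL //; lia.
have := d2 (inord a) ; rewrite inordK; last by lia.
move=> /(_ ha); rewrite eq c2 // ?inordK; try lia.
have -> : inord a = a :> 'I_(p.+2) by apply: val_inj; rewrite /= inordK //; lia.
by rewrite updE eqxx => ->.
Qed.

Lemma G3_half p (C : {set {ffun 'I_(p.+3) -> 'I_(p.+2)}}) (x : {ffun 'I_(p.+2) -> 'I_(p.+2)}) (a a' v v' : 'I_(p.+2)) :
  perfect_code C -> (a : nat) != p.+1 -> a != a' -> v != x a ->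
  sgC C (upd x a v) = sgC C (upd x a' v') -> tuC C (upd x a v) = tuC C (upd x a' v') -> False.
Proof.
move=> pc na naa' nv es et.
have ha : a < p.+1 by have := ltn_ord a; lia.
have naa'n : (a : nat) != a' by [].
have [d1 d2] := cw_spec (upd x a v) pc.
have [e1 e2] := cw_spec (upd x a' v') pc.
have key : forall i : 'I_(p.+3), (i:nat) != a -> ((i:nat) = p.+1 -> (a':nat) != p.+1) ->
    ((i:nat) < p.+1 -> (i:nat) != a') -> cw C (upd x a v) i = cw C (upd x a' v') i.
  move=> i n1 n2 n3.
  case: (eqVneq (i : nat) p.+2) => [ei|ni2].
    have -> : i = inord p.+2 by apply: val_inj; rewrite /= inordK.
    exact: et.
  case: (eqVneq (i : nat) p.+1) => [ei|ni1].
    have -> : i = inord p.+1 by apply: val_inj; rewrite /= inordK.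
    have h1 : upd x a v (inord p.+1) = x (inord p.+1) by apply: updL.
    have h2 : upd x a' v' (inord p.+1) = x (inord p.+1) by apply: updL; [ | exact: (n2 ei)].
    by move: es; rewrite /sgC h1 h2 => /addq_inj_r.
  have hi : i < p.+1 by have := ltn_ord i; lia.
  have h1 : upd x a v (inord i) = x (inord i) by apply: updL; [lia | rewrite eq_sym].
  have h2 : upd x a' v' (inord i) = x (inord i) by apply: updL; [lia | rewrite eq_sym; apply: n3].
  by rewrite (d2 i hi) (e2 i hi) h1 h2.
have eqc : cw C (upd x a v) = cw C (upd x a' v').
  have hA : (a : nat) < p.+3 by apply: ltn_trans ha _.
  have hP1 : p.+1 < p.+3 by [].
  case: (eqVneq (a' : nat) p.+1) => [ea'|na'].
    apply: (pc_dist (j1 := inord a) (j2 := inord p.+1) pc d1 e1) => i n1 n2.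
    move: n1 n2; rewrite (ord_eq_inord _ hA) (ord_eq_inord _ hP1) => n1 n2.
    apply: (key i n1).
      by move=> e; rewrite e eqxx in n2.
    by move=> hi; rewrite ea'; apply/eqP => e; rewrite e ltnn in hi.
  have hA' : (a' : nat) < p.+3 by apply: ltn_trans (ltn_ord a') _.
  apply: (pc_dist (j1 := inord a) (j2 := inord a') pc d1 e1) => i n1 n2.
  move: n1 n2; rewrite (ord_eq_inord _ hA) (ord_eq_inord _ hA') => n1 n2.
  by apply: (key i n1) => _.
have hA3 : (a : nat) < p.+3 by apply: ltn_trans ha _.
have hAi : ((inord a : 'I_(p.+3)) : nat) < p.+1 by rewrite (inordK hA3).
have ia : inord (inord a : 'I_(p.+3)) = a :> 'I_(p.+2).
  apply: val_inj; rewrite /= (inordK hA3); exact: inordK (ltn_ord a).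
have := congr1 (fun f : {ffun 'I_(p.+3) -> 'I_(p.+2)} => f (inord a)) eqc.
rewrite /= (d2 _ hAi) (e2 _ hAi) ia !updE eqxx.
case: (a =P a') => [e|_]; first by rewrite e eqxx in naa'.
by move=> e; rewrite e eqxx in nv.
Qed.

Lemma G3_C p (C : {set {ffun 'I_(p.+3) -> 'I_(p.+2)}}) : perfect_code C -> G3 (@sgC p C) (@tuC p C).
Proof.
move=> pc x a a' v v' naa' nv nv' es; apply/negP => /eqP et.
case: (eqVneq (a : nat) p.+1) => [ea|na]; last exact: (G3_half pc na naa' nv es et).
have na' : (a' : nat) != p.+1 by apply: contra naa' => /eqP e; apply/eqP/val_inj; rewrite /= ea e.
by apply: (G3_half pc na' _ nv' (esym es) (esym et)); rewrite eq_sym.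
Qed.

Lemma blockmap_exists q : 1 < q -> (exists C : {set hvert q.+1 q}, perfect_code C) ->
  exists (sg tu : {ffun 'I_q -> 'I_q} -> 'I_q), G1 sg /\ G3 sg tu.
Proof.
case: q => [//|[//|p]] _ [C pc].
by exists (@sgC p C), (@tuC p C); split; [exact: G1_C | exact: G3_C].
Qed.

Definition blk (J : finType) q m (X : {ffun ((J * 'I_q) + 'I_m)%type -> 'I_q}) (j : J)
  : {ffun 'I_q -> 'I_q} := [ffun a => X (inl (j, a))].
Definition sigX (J : finType) q m (sg : {ffun 'I_q -> 'I_q} -> 'I_q)
  (X : {ffun ((J * 'I_q) + 'I_m)%type -> 'I_q}) : {ffun J -> 'I_q} :=
  [ffun j => sg (blk X j)].
Definition Wset (J : finType) q m (tu : {ffun 'I_q -> 'I_q} -> 'I_q)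
  (X : {ffun ((J * 'I_q) + 'I_m)%type -> 'I_q}) (T : {set J}) : nat :=
  (\sum_(j | j \notin T) (tu (blk X j) : nat) + \sum_(l : 'I_m) (X (inr l) : nat)) %% q.

Lemma blk_updl (J : finType) q m (X : {ffun ((J * 'I_q) + 'I_m)%type -> 'I_q}) j a v j' :
  blk (upd X (inl (j, a)) v) j' = if j' == j then upd (blk X j) a v else blk X j'.
Proof.
apply/ffunP=> a'; case: (j' =P j) => [->|/eqP nj]; rewrite !ffunE.
  case: (a' =P a) => [->|/eqP na]; first by rewrite eqxx.
  case: eqP => // [[e]]; by rewrite e eqxx in na.
case: eqP => // [[e]]; by rewrite e eqxx in nj.
Qed.

Lemma blk_updr (J : finType) q m (X : {ffun ((J * 'I_q) + 'I_m)%type -> 'I_q}) l v j' :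
  blk (upd X (inr l) v) j' = blk X j'.
Proof. by apply/ffunP=> a'; rewrite !ffunE. Qed.

Lemma sig_updl (J : finType) q m sg (X : {ffun ((J * 'I_q) + 'I_m)%type -> 'I_q}) j a v :
  sigX sg (upd X (inl (j, a)) v) = upd (sigX sg X) j (sg (upd (blk X j) a v)).
Proof.
apply/ffunP=> j'; rewrite updE !ffunE blk_updl.
by case: (j' == j).
Qed.

Lemma sig_updr (J : finType) q m sg (X : {ffun ((J * 'I_q) + 'I_m)%type -> 'I_q}) l v :
  sigX sg (upd X (inr l) v) = sigX sg X.
Proof. by apply/ffunP=> j'; rewrite !ffunE blk_updr. Qed.

Lemma W_in (J : finType) q m tu (X : {ffun ((J * 'I_q) + 'I_m)%type -> 'I_q}) (T : {set J}) j a v :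
  j \in T -> Wset tu (upd X (inl (j, a)) v) T = Wset tu X T.
Proof.
move=> hj; rewrite /Wset; congr ((_ + _) %% _).
  apply: eq_bigr => j' hj'; rewrite blk_updl; case: (j' =P j) => [e|//].
  by rewrite e hj in hj'.
by apply: eq_bigr => l _; rewrite updE.
Qed.

Definition Rj (J : finType) q m (tu : {ffun 'I_q -> 'I_q} -> 'I_q)
  (X : {ffun ((J * 'I_q) + 'I_m)%type -> 'I_q}) (j : J) (T : {set J}) : nat :=
  \sum_(j' | (j' \notin T) && (j' != j)) (tu (blk X j') : nat) + \sum_(l : 'I_m) (X (inr l) : nat).

Lemma W_out (J : finType) q m tu (X : {ffun ((J * 'I_q) + 'I_m)%type -> 'I_q}) (T : {set J}) j a v :
  j \notin T -> Wset tu (upd X (inl (j, a)) v) T = (Rj tu X j T + tu (upd (blk X j) a v)) %% q.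
Proof.
move=> hj; rewrite /Wset /Rj (bigD1 j hj) /= blk_updl eqxx.
have -> : \sum_(l : 'I_m) (upd X (inl (j, a)) v (inr l) : nat) = \sum_(l : 'I_m) (X (inr l) : nat).
  by apply: eq_bigr => l _; rewrite updE.
have -> : \sum_(i | (i \notin T) && (i != j)) (tu (blk (upd X (inl (j, a)) v) i) : nat)
        = \sum_(i | (i \notin T) && (i != j)) (tu (blk X i) : nat).
  by apply: eq_bigr => i /andP [_ /negbTE hi]; rewrite blk_updl hi.
by congr (_ %% _); rewrite [RHS]addnC addnA.
Qed.

Definition Rz (J : finType) q m (tu : {ffun 'I_q -> 'I_q} -> 'I_q)
  (X : {ffun ((J * 'I_q) + 'I_m)%type -> 'I_q}) (l : 'I_m) (T : {set J}) : nat :=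
  \sum_(j | j \notin T) (tu (blk X j) : nat) + \sum_(l' | l' != l) (X (inr l') : nat).

Lemma W_z (J : finType) q m tu (X : {ffun ((J * 'I_q) + 'I_m)%type -> 'I_q}) (T : {set J}) l v :
  Wset tu (upd X (inr l) v) T = (Rz tu X l T + v) %% q.
Proof.
rewrite /Wset /Rz (bigD1 l) //= updE eqxx.
have -> : \sum_(j | j \notin T) (tu (blk (upd X (inr l) v) j) : nat) = \sum_(j | j \notin T) (tu (blk X j) : nat).
  by apply: eq_bigr => i _; rewrite blk_updr.
have -> : \sum_(i | i != l) (upd X (inr l) v (inr i) : nat) = \sum_(i | i != l) (X (inr i) : nat).
  by apply: eq_bigr => i /negbTE hi; rewrite updE -[_ == _]/(i == l) hi.
by congr (_ %% _); rewrite -addnA [v + _]addnC.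
Qed.

Lemma modcount q (R t : nat) : 0 < q -> t <= q ->
  #|[set u : 'I_q | (R + u) %% q < t]| = t.
Proof.
move=> q0 tq.
pose h := fun u : 'I_q => Ordinal (ltn_pmod (R + u) q0).
have hinj : injective h.
  move=> u u' /(congr1 val) /= /eqP; rewrite eqn_modDl !modn_small // => /eqP e.
  exact: val_inj.
have -> : [set u : 'I_q | (R + u) %% q < t] = h @^-1: [set w : 'I_q | w < t].
  by apply/setP=> u; rewrite !inE.
rewrite card_preimset //.
have -> : [set w : 'I_q | w < t] = [set widen_ord tq w | w in 'I_t].
  apply/setP=> w; rewrite inE; apply/idP/imsetP => [hw|[w' _ ->]].
    by exists (Ordinal hw) => //; apply: val_inj.
  exact: (ltn_ord w').
rewrite card_imset ?card_ord //.
by move=> w w' /(congr1 val) /= e; apply: val_inj.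
Qed.

Lemma modcountC q (R t : nat) : 0 < q -> t <= q ->
  #|[set u : 'I_q | ~~ ((R + u) %% q < t)]| = q - t.
Proof.
move=> q0 tq; have := cardsC [set u : 'I_q | (R + u) %% q < t].
rewrite modcount // card_ord.
have -> : ~: [set u : 'I_q | (R + u) %% q < t] = [set u : 'I_q | ~~ ((R + u) %% q < t)].
  by apply/setP=> u; rewrite !inE.
lia.
Qed.

Lemma card_part (T U : finType) (h : T -> U) (P : U -> T -> bool) :
  #|[set v | P (h v) v]| = \sum_s #|[set v | (h v == s) && P s v]|.
Proof.
rewrite card_cond (eq_bigr (fun s => \sum_v ((h v == s) && P s v : nat))); last first.
  by move=> s _; rewrite card_cond.
rewrite exchange_big /=; apply: eq_bigr => v _.
rewrite (bigD1 (h v)) //= eqxx big1 ?addn0 //.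
by move=> s /negbTE hs; rewrite eq_sym hs.
Qed.

Lemma card_del (T : finType) (x0 : T) (P : pred T) :
  #|[set v | (v != x0) && P v]| = #|[set v | P v]| - P x0.
Proof.
rewrite (cardsD1 x0 [set v | P v]) inE.
have -> : [set v | P v] :\ x0 = [set v | (v != x0) && P v] by apply/setP=> v; rewrite !inE.
by case: (P x0); lia.
Qed.

Lemma sum_I (J : finType) q m (F : ((J * 'I_q) + 'I_m)%type -> nat) :
  \sum_i F i = \sum_j \sum_a F (inl (j, a)) + \sum_l F (inr l).
Proof.
rewrite big_sumType /=; congr (_ + _).
by rewrite pair_bigA /=; apply: eq_bigr => [[j a]].
Qed.

Definition gX (J : finType) q m (sg tu : {ffun 'I_q -> 'I_q} -> 'I_q)
  (f : {ffun J -> 'I_q} -> nat) (S : {ffun J -> 'I_q} -> {set J}) (t : nat)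
  (X : {ffun ((J * 'I_q) + 'I_m)%type -> 'I_q}) : nat :=
  if (f (sigX sg X) == 1) && (Wset tu X (S (sigX sg X)) < t) then 1 else 2.

Definition gF (J : finType) q m (sg tu : {ffun 'I_q -> 'I_q} -> 'I_q)
  (f : {ffun J -> 'I_q} -> nat) (S : {ffun J -> 'I_q} -> {set J}) (t : nat)
  (X : {ffun ((J * 'I_q) + 'I_m)%type -> 'I_q}) (j : J) (s u : 'I_q) : nat :=
  let p' := upd (sigX sg X) j s in
  if (f p' == 1) && ((if j \in S p' then Wset tu X (S p') else (Rj tu X j (S p') + u) %% q) < t)
  then 1 else 2.

Lemma g_block (J : finType) q m sg tu f S t (X : {ffun ((J * 'I_q) + 'I_m)%type -> 'I_q}) j a v :
  gX sg tu f S t (upd X (inl (j, a)) v) =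
  gF sg tu f S t X j (sg (upd (blk X j) a v)) (tu (upd (blk X j) a v)).
Proof.
rewrite /gX /gF sig_updl /=.
case: (boolP (j \in S (upd (sigX sg X) j (sg (upd (blk X j) a v))))) => hj.
  by rewrite W_in.
by rewrite W_out.
Qed.

Lemma g_z (J : finType) q m sg tu f S t (X : {ffun ((J * 'I_q) + 'I_m)%type -> 'I_q}) l v :
  gX sg tu f S t (upd X (inr l) v) =
  if (f (sigX sg X) == 1) && ((Rz tu X l (S (sigX sg X)) + v) %% q < t) then 1 else 2.
Proof. by rewrite /gX sig_updr W_z. Qed.

Lemma blocksum (J : finType) q m sg tu f S t (X : {ffun ((J * 'I_q) + 'I_m)%type -> 'I_q}) j K :
  G1 sg -> G3 sg tu ->
  \sum_a #|[set v | (v != X (inl (j, a))) && (gX sg tu f S t (upd X (inl (j, a)) v) == K)]|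
  = \sum_(s | s != sigX sg X j) #|[set u | gF sg tu f S t X j s u == K]|.
Proof.
move=> g1 g3.
set x := blk X j.
have e1 a : #|[set v | (v != X (inl (j, a))) && (gX sg tu f S t (upd X (inl (j, a)) v) == K)]|
   = \sum_s #|[set v | [&& v != x a, sg (upd x a v) == s & gF sg tu f S t X j s (tu (upd x a v)) == K]]|.
  pose h := fun v => sg (upd x a v).
  pose P := fun s v => (v != x a) && (gF sg tu f S t X j s (tu (upd x a v)) == K).
  have -> : [set v | (v != X (inl (j, a))) && (gX sg tu f S t (upd X (inl (j, a)) v) == K)]
          = [set v | P (h v) v].
    by apply/setP=> v; rewrite !inE g_block /P /h /x ffunE.
  rewrite card_part; apply: eq_bigr => s _; congr #|pred_of_set _|.
  apply/setP=> v; rewrite !inE /P /h.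
  by case: (v != x a); case: (sg (upd x a v) == s).
rewrite (eq_bigr _ (fun a _ => e1 a)) exchange_big /=.
have hs : sigX sg X j = sg x by rewrite ffunE.
rewrite hs (bigD1 (sg x)) //= big1 ?add0n; last first.
  move=> a _; apply/eqP; rewrite cards_eq0; apply/eqP/setP => v; rewrite !inE.
  apply/negP => /and3P [hv /eqP e _]; move: hv; rewrite (g1 _ _ _ e) eqxx //.
apply: eq_bigr => s hs'.
exact: (@block_count q sg tu x s (fun u => gF sg tu f S t X j s u == K) g1 g3 hs').
Qed.

Definition Fprop (J : finType) q k (f : {ffun J -> 'I_q} -> nat) (S : {ffun J -> 'I_q} -> {set J}) :=
  (forall x, f x = 1 -> #|S x| = k) /\
  (forall x, f x = 1 -> forall i v, i \in S x -> f (upd x i v) = 1 /\ S (upd x i v) = S x).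

Lemma notS (J : finType) q k f S (p : {ffun J -> 'I_q}) j s :
  @Fprop J q k f S -> (f p != 1) || (j \notin S p) -> f (upd p j s) = 1 -> j \notin S (upd p j s).
Proof.
move=> [_ F1] h e; apply/negP => hj.
have [h1 h2] := F1 _ e j (p j) hj; move: h1 h2; rewrite upd_upd upd_same => h1 h2.
by move: h; rewrite h1 eqxx h2 hj.
Qed.

Definition N1 (J : finType) q (f : {ffun J -> 'I_q} -> nat) (p : {ffun J -> 'I_q}) j :=
  #|[set s | (s != p j) && (f (upd p j s) == 1)]|.
Definition N2 (J : finType) q (f : {ffun J -> 'I_q} -> nat) (p : {ffun J -> 'I_q}) j :=
  #|[set s | (s != p j) && (f (upd p j s) == 2)]|.

Lemma sumAB (J : finType) q (f : {ffun J -> 'I_q} -> nat) (p : {ffun J -> 'I_q}) j A B :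
  (forall x, f x = 1 \/ f x = 2) ->
  \sum_(s | s != p j) (if f (upd p j s) == 1 then A else B) = A * N1 f p j + B * N2 f p j.
Proof.
move=> h12; rewrite /N1 /N2 !card_cond !big_distrr /= -big_split /=.
rewrite big_mkcond /=; apply: eq_bigr => s _.
case: (s != p j); rewrite /= ?muln0 //.
by case: (h12 (upd p j s)) => ->; rewrite /= ?muln0 ?muln1 ?addn0.
Qed.

Lemma N12 (J : finType) q (f : {ffun J -> 'I_q} -> nat) (p : {ffun J -> 'I_q}) j :
  (forall x, f x = 1 \/ f x = 2) -> N1 f p j + N2 f p j = q.-1.
Proof.
move=> h12; have := sumAB p j 1 1 h12; rewrite !mul1n => <-.
rewrite (eq_bigr (fun _ => 1)); last by move=> s _; case: ifP.
rewrite sum1_card.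
have -> : #|[pred s | s != p j]| = #|[set~ p j]| by apply: eq_card => s; rewrite !inE.
by rewrite cardsC1 card_ord.
Qed.

Lemma card_const (T : finType) (b : bool) : #|[set u : T | b]| = if b then #|T| else 0.
Proof. by case: b; rewrite ?setT_in ?cardsT //= -(cards0 T); congr #|pred_of_set _|; apply/setP=> u; rewrite !inE. Qed.

Lemma btA (J : finType) q m k sg tu f S t (X : {ffun ((J * 'I_q) + 'I_m)%type -> 'I_q}) j K :
  @Fprop J q k f S -> f (sigX sg X) = 1 -> j \in S (sigX sg X) ->
  \sum_(s | s != sigX sg X j) #|[set u | gF sg tu f S t X j s u == K]|
  = (q.-1 * q) * (gX sg tu f S t X == K).
Proof.
move=> [F0 F1] hp hj.
rewrite (eq_bigr (fun _ => q * (gX sg tu f S t X == K))); last first.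
  move=> s _.
  have [h1 h2] := F1 _ hp j s hj.
  have -> : [set u | gF sg tu f S t X j s u == K] = [set u : 'I_q | gX sg tu f S t X == K].
    by apply/setP=> u; rewrite !inE /gF /gX h1 h2 hj hp eqxx.
  by rewrite card_const card_ord; case: (_ == K); rewrite ?muln1 ?muln0.
rewrite sum_nat_const mulnA; congr (_ * _ * _).
have -> : #|[pred s | s != sigX sg X j]| = #|[set~ sigX sg X j]| by apply: eq_card => s; rewrite !inE.
by rewrite cardsC1 card_ord.
Qed.

Lemma btB (J : finType) q m k sg tu f S t (X : {ffun ((J * 'I_q) + 'I_m)%type -> 'I_q}) j :
  0 < q -> t <= q -> (forall x, f x = 1 \/ f x = 2) ->
  @Fprop J q k f S -> (f (sigX sg X) != 1) || (j \notin S (sigX sg X)) ->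
  (\sum_(s | s != sigX sg X j) #|[set u | gF sg tu f S t X j s u == 1]|
    = t * N1 f (sigX sg X) j) /\
  (\sum_(s | s != sigX sg X j) #|[set u | gF sg tu f S t X j s u == 2]|
    = (q - t) * N1 f (sigX sg X) j + q * N2 f (sigX sg X) j).
Proof.
move=> q0 tq h12 FP hB.
set p := sigX sg X.
split.
  have := sumAB p j t 0 h12; rewrite mul0n addn0 => <-.
  apply: eq_bigr => s _; case: (boolP (f (upd p j s) == 1)) => [/eqP e|e].
    have hn := notS (s := s) FP hB e.
    have -> : [set u | gF sg tu f S t X j s u == 1] = [set u : 'I_q | (Rj tu X j (S (upd p j s)) + u) %% q < t].
      apply/setP=> u; rewrite !inE /gF /= -/p e eqxx (negbTE hn) /=.
      by case: ifP.
    exact: modcount.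
  apply/eqP; rewrite cards_eq0; apply/eqP/setP=> u; rewrite !inE /gF /= -/p.
  by rewrite (negbTE e).
rewrite -sumAB //.
apply: eq_bigr => s _; case: (boolP (f (upd p j s) == 1)) => [/eqP e|e].
  have hn := notS (s := s) FP hB e.
  have -> : [set u | gF sg tu f S t X j s u == 2] = [set u : 'I_q | ~~ ((Rj tu X j (S (upd p j s)) + u) %% q < t)].
    apply/setP=> u; rewrite !inE /gF /= -/p e eqxx (negbTE hn) /=.
    by case: ifP.
  exact: modcountC.
have -> : [set u | gF sg tu f S t X j s u == 2] = [set: 'I_q].
  apply/setP=> u; rewrite !inE /gF /= -/p.
  by rewrite (negbTE e).
by rewrite cardsT card_ord.
Qed.

Lemma zc (J : finType) q m sg tu f S t (X : {ffun ((J * 'I_q) + 'I_m)%type -> 'I_q}) l :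
  0 < q -> t <= q ->
  (f (sigX sg X) != 1 -> #|[set v | (v != X (inr l)) && (gX sg tu f S t (upd X (inr l) v) == 1)]| = 0) /\
  (f (sigX sg X) = 1 ->
    #|[set v | (v != X (inr l)) && (gX sg tu f S t (upd X (inr l) v) == 1)]|
      = t - (gX sg tu f S t X == 1) /\
    #|[set v | (v != X (inr l)) && (gX sg tu f S t (upd X (inr l) v) == 2)]|
      = (q - t) - (gX sg tu f S t X == 2)).
Proof.
move=> q0 tq.
have gXE : gX sg tu f S t X = gX sg tu f S t (upd X (inr l) (X (inr l))) by rewrite upd_same.
split.
  move=> /negbTE hp; apply/eqP; rewrite cards_eq0; apply/eqP/setP=> v.
  by rewrite !inE g_z hp /= andbF.
move=> hp; rewrite gXE !card_del.
have e0 : gX sg tu f S t (upd X (inr l) (X (inr l))) = gX sg tu f S t X by rewrite upd_same.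
set R := Rz tu X l (S (sigX sg X)).
have c1 : #|[set v : 'I_q | gX sg tu f S t (upd X (inr l) v) == 1]| = t.
  apply: etrans (modcount R q0 tq); congr #|pred_of_set _|.
  by apply/setP=> v; rewrite !inE g_z hp eqxx /= -/R; case: ifP.
have c2 : #|[set v : 'I_q | gX sg tu f S t (upd X (inr l) v) == 2]| = q - t.
  apply: etrans (modcountC R q0 tq); congr #|pred_of_set _|.
  by apply/setP=> v; rewrite !inE g_z hp eqxx /= -/R; case: ifP.
by rewrite c1 c2 e0.
Qed.

Lemma gF_free (J : finType) q m k sg tu f S t (X : {ffun ((J * 'I_q) + 'I_m)%type -> 'I_q}) j s u :
  @Fprop J q k f S -> f (sigX sg X) = 1 -> j \in S (sigX sg X) ->
  gF sg tu f S t X j s u = gX sg tu f S t X.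
Proof.
move=> [F0 F1] hp hj; have [h1 h2] := F1 _ hp j s hj.
by rewrite /gF /gX /= h1 h2 hj hp.
Qed.

Lemma count_g (J : finType) q m sg tu f S t (X : {ffun ((J * 'I_q) + 'I_m)%type -> 'I_q}) K :
  G1 sg -> G3 sg tu ->
  #|[set Y | adjI X Y & gX sg tu f S t Y == K]| =
  \sum_j \sum_(s | s != sigX sg X j) #|[set u | gF sg tu f S t X j s u == K]| +
  \sum_l #|[set v | (v != X (inr l)) && (gX sg tu f S t (upd X (inr l) v) == K)]|.
Proof.
move=> g1 g3; rewrite card_nbr sum_I; congr (_ + _).
by apply: eq_bigr => j _; apply: blocksum.
Qed.

Lemma sum_split (J : finType) (A : {set J}) (F : J -> nat) :
  \sum_j F j = \sum_(j in A) F j + \sum_(j | j \notin A) F j.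
Proof. by rewrite (bigID (mem A) predT). Qed.

Lemma fsums (J : finType) q k b c m (f : {ffun J -> 'I_q} -> nat) S (p : {ffun J -> 'I_q}) :
  colI b c f -> @Fprop J q k f S -> k * q.-1 + b + c = #|J| * q.-1 + m -> f p = 1 ->
  \sum_(j | j \notin S p) N2 f p j = b /\ \sum_(j | j \notin S p) N1 f p j + m = c.
Proof.
move=> [h12 [_ [_ [hb hc]]]] [F0 F1] hm hp.
have hb' : \sum_j N2 f p j = b by rewrite -(hb p hp) card_nbr.
have hS j : j \in S p -> N1 f p j = q.-1 /\ N2 f p j = 0.
  move=> hj.
  have e2 : N2 f p j = 0.
    apply/eqP; rewrite cards_eq0; apply/eqP/setP=> s; rewrite !inE.
    by have [-> _] := F1 _ hp j s hj; rewrite andbF.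
  by split => //; have := N12 p j h12; rewrite e2 addn0.
have s2 : \sum_(j in S p) N2 f p j = 0 by rewrite big1 // => j hj; case: (hS j hj).
have s1 : \sum_(j in S p) N1 f p j = k * q.-1.
  rewrite (eq_bigr (fun _ => q.-1)); last by move=> j hj; case: (hS j hj).
  by rewrite sum_nat_const (F0 _ hp).
have sall : \sum_j (N1 f p j + N2 f p j) = #|J| * q.-1.
  rewrite (eq_bigr (fun _ => q.-1)); last by move=> j _; exact: N12.
  by rewrite sum_nat_const.
move: hb' sall; rewrite (sum_split (S p)) s2 add0n => hb'.
rewrite (sum_split (S p)) !big_split /= s1 s2 hb' => sall.
split => //.
move: hm; rewrite -sall.
set E := \sum_(j | j \notin S p) N1 f p j.
lia.
Qed.

Lemma gX1 (J : finType) q m sg tu f S t (X : {ffun ((J * 'I_q) + 'I_m)%type -> 'I_q}) :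
  gX sg tu f S t X = 1 -> f (sigX sg X) = 1.
Proof. by rewrite /gX; case: ifP => // /andP [/eqP]. Qed.

Lemma gX12 (J : finType) q m sg tu f S t (X : {ffun ((J * 'I_q) + 'I_m)%type -> 'I_q}) :
  gX sg tu f S t X = 1 \/ gX sg tu f S t X = 2.
Proof. by rewrite /gX; case: ifP; [left|right]. Qed.

Lemma step (J : finType) q m k b c t sg tu (f : {ffun J -> 'I_q} -> nat) (S : {ffun J -> 'I_q} -> {set J}) :
  1 < q -> G1 sg -> G3 sg tu -> 0 < t -> t <= q -> 0 < c ->
  colI b c f -> @Fprop J q k f S -> k * q.-1 + b + c = #|J| * q.-1 + m ->
  colI (q * b + (q - t) * c) (t * c) (@gX J q m sg tu f S t) /\
  Fprop (k * q) (@gX J q m sg tu f S t)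
     (fun X => [set inl x | x in setX (S (sigX sg X)) [set: 'I_q]]) /\
  (k * q) * q.-1 + (q * b + (q - t) * c) + t * c = (#|J| * q + m) * q.-1 + m.
Proof.
move=> q1 g1 g3 t0 tq c0 hf FP hm.
have q0 : 0 < q by apply: ltnW.
have [h12 [[x1 hx1] [[x2 hx2] [hb hc]]]] := hf.
have [F0 F1] := FP.
set g := @gX J q m sg tu f S t.
have cnt1 X : g X = 1 -> #|[set Y | adjI X Y & g Y == 2]| = q * b + (q - t) * c.
  move=> hg; have hp := gX1 hg.
  rewrite count_g //.
  have [sb sc] := fsums hf FP hm hp.
  rewrite (sum_split (S (sigX sg X))) big1; last first.
    by move=> j hj; rewrite (btA _ _ _ FP hp hj) -/g hg muln0.
  rewrite add0n (eq_bigr (fun j => (q - t) * N1 f (sigX sg X) j + q * N2 f (sigX sg X) j)); last first.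
    move=> j hj; have [_ ->] := btB tu q0 tq h12 FP (introT orP (or_intror hj)) => //.
  rewrite big_split /= -!big_distrr /= sb.
  have Zs : \sum_(l : 'I_m) #|[set v | (v != X (inr l)) && (g (upd X (inr l) v) == 2)]| = m * (q - t).
    rewrite (eq_bigr (fun _ => q - t)); last first.
      move=> l _; have [_ h] := zc sg tu f S X l q0 tq; have [_ ->] := h hp.
      by rewrite -/g hg subn0.
    by rewrite sum_nat_const card_ord.
  rewrite Zs.
  move: sc; set E := \sum_(j | _) _ => sc.
  rewrite -sc; nia.
have cnt2 X : g X = 2 -> #|[set Y | adjI X Y & g Y == 1]| = t * c.
  move=> hg; rewrite count_g //.
  case: (boolP (f (sigX sg X) == 1)) => [/eqP hp | hp].
    have [sb sc] := fsums hf FP hm hp.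
    rewrite (sum_split (S (sigX sg X))) big1; last first.
      by move=> j hj; rewrite (btA _ _ _ FP hp hj) -/g hg muln0.
    rewrite add0n (eq_bigr (fun j => t * N1 f (sigX sg X) j)); last first.
      move=> j hj; have [-> _] := btB tu q0 tq h12 FP (introT orP (or_intror hj)) => //.
    rewrite -big_distrr /=.
    have Zs : \sum_(l : 'I_m) #|[set v | (v != X (inr l)) && (g (upd X (inr l) v) == 1)]| = m * t.
      rewrite (eq_bigr (fun _ => t)); last first.
        move=> l _; have [_ h] := zc sg tu f S X l q0 tq; have [-> _] := h hp.
        by rewrite -/g hg subn0.
      by rewrite sum_nat_const card_ord.
    rewrite Zs.
    move: sc; set E := \sum_(j | _) _ => sc.
    rewrite -sc; nia.
  have hp2 : f (sigX sg X) = 2 by case: (h12 (sigX sg X)) => // e; rewrite e in hp.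
  rewrite (eq_bigr (fun j => t * N1 f (sigX sg X) j)); last first.
    move=> j _; have [-> _] := @btB J q m k sg tu f S t X j q0 tq h12 FP (introT orP (or_introl hp)) => //.
  have Zs : \sum_(l : 'I_m) #|[set v | (v != X (inr l)) && (g (upd X (inr l) v) == 1)]| = 0.
    by apply: big1 => l _; have [h _] := zc sg tu f S X l q0 tq; exact: h hp.
  rewrite Zs addn0 -big_distrr /=; congr (_ * _).
  by rewrite -(hc _ hp2) card_nbr.
pose z0 : 'I_q := Ordinal q0.
pose x0 : {ffun 'I_q -> 'I_q} := [ffun => z0].
have son s : exists x, sg x == s.
  have inj : injective (fun v => sg (upd x0 z0 v)).
    move=> v v' /= e; have := g1 (upd x0 z0 v) z0 v'.
    by rewrite upd_upd e updE eqxx => ->.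
  have := inj_card_onto inj (leqnn _) s.
  by move/codomP => [v ->]; exists (upd x0 z0 v).
pose blkf s := xchoose (son s).
pose Xof (p : {ffun J -> 'I_q}) : {ffun ((J * 'I_q) + 'I_m)%type -> 'I_q} :=
  [ffun i => match i with inl ja => blkf (p ja.1) ja.2 | inr _ => z0 end].
have sigXof p : sigX sg (Xof p) = p.
  apply/ffunP=> j; rewrite ffunE.
  have -> : blk (Xof p) j = blkf (p j) by apply/ffunP=> a; rewrite !ffunE.
  exact: (eqP (xchooseP (son (p j)))).
have gX2 : g (Xof x2) = 2 by rewrite /g /gX sigXof hx2.
split.
  split; first by move=> X; exact: gX12.
  split.
    have := cnt2 _ gX2; move/(congr1 (fun n => 0 < n)); rewrite muln_gt0 t0 c0 /= card_gt0.
    by move/set0Pn => [Y]; rewrite inE => /andP [_ /eqP]; exists Y.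
  split; first by exists (Xof x2).
  by split; [exact: cnt1 | exact: cnt2].
split.
  split.
    move=> X hg; have hp := gX1 hg.
    rewrite card_imset; last by move=> u v [].
    by rewrite cardsX cardsT card_ord (F0 _ hp).
  move=> X hg i v /imsetP [[j a] hja ->].
  move: hja; rewrite in_setX in_setT andbT /= => hja.
  have hp := gX1 hg.
  have [h1 h2] := F1 _ hp j (sg (upd (blk X j) a v)) hja.
  split.
    by rewrite /g g_block (gF_free _ _ _ _ FP hp hja) -/g hg.
  by rewrite sig_updl h2.
nia.
Qed.

Lemma card_I (J : finType) q m : #|{: (J * 'I_q) + 'I_m}| = #|J| * q + m.
Proof. by rewrite card_sum card_prod !card_ord. Qed.

Lemma iter q (sg tu : {ffun 'I_q -> 'I_q} -> 'I_q) (ts : seq nat) : 1 < q -> G1 sg -> G3 sg tu -> all (fun x => 0 < x <= q) ts ->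
  forall (J : finType) b c k m (f : {ffun J -> 'I_q} -> nat) S,
  0 < c -> colI b c f -> @Fprop J q k f S -> k * q.-1 + b + c = #|J| * q.-1 + m ->
  exists (I : finType) (g : {ffun I -> 'I_q} -> nat) b' c',
    colI b' c' g /\ #|I| = q ^ size ts * #|J| + m * \sum_(i < size ts) q ^ i /\
    b' + c' = q ^ size ts * (b + c) /\ c' = (\prod_(x <- ts) x) * c.
Proof.
move=> q1 g1 g3; elim: ts => [|t ts IH] /=.
  move=> _ J b c k m f S c0 hf FP hm; exists J, f, b, c; split => //.
  by rewrite big_ord0 big_nil muln0 addn0 !mul1n.
move=> /andP [/andP [t0 tq] hts] J b c k m f S c0 hf FP hm.
have [hg [hF ha]] := @step J q m k b c t sg tu f S q1 g1 g3 t0 tq c0 hf FP hm.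
have c0' : 0 < t * c by rewrite muln_gt0 t0 c0.
have ha' : (k * q) * q.-1 + (q * b + (q - t) * c) + t * c = #|{: (J * 'I_q) + 'I_m}| * q.-1 + m.
  by rewrite card_I.
have [I [g [b' [c' [hg' [hI [hbc hc']]]]]]] := IH hts _ _ _ _ _ _ _ c0' hg hF ha'.
exists I, g, b', c'; split => //.
split.
  rewrite hI card_I big_ord_recr /= expnS; nia.
split.
  rewrite hbc expnS; nia.
by rewrite hc' big_cons mulnA [t * _]mulnC.
Qed.

Definition faceset n q (T : {set 'I_n}) (a : hvert n q) : {set hvert n q} :=
  [set x : hvert n q | [forall i, (i \notin T) ==> (x i == a i)]].

Definition Sof n q k (B : {set hvert n q}) : {set 'I_n} :=
  odflt set0 [pick T : {set 'I_n} | (#|T| == k) && [exists a : hvert n q, B == faceset T a]].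

Lemma face_Fprop n q k (f : hvert n q -> nat) :
  color1_face_partition k f ->
  exists S, @Fprop 'I_n q k f S.
Proof.
move=> [P [hP hF]].
move/and3P: hP => [/eqP hcov htriv _].
have cov x : (x \in cover P) = (f x == 1) by rewrite hcov inE.
exists (fun x => Sof k (pblock P x)).
have spec x : f x = 1 -> #|Sof k (pblock P x)| = k /\
    exists a, pblock P x = faceset (Sof k (pblock P x)) a.
  move=> hx.
  have hB : pblock P x \in P by apply: pblock_mem; rewrite cov hx.
  rewrite /Sof; case: pickP => [T /andP [/eqP hT /existsP [a /eqP ha]] | h] /=.
    by split => //; exists a.
  have [T [a [hT hB']]] := hF _ hB.
  have := h T; rewrite hT eqxx /=; move/negbT/negP; case.
  by apply/existsP; exists a; apply/eqP; rewrite hB'.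
split; first by move=> x hx; have [] := spec x hx.
move=> x hx i v hi.
have [_ [a ha]] := spec x hx.
have hB : pblock P x \in P by apply: pblock_mem; rewrite cov hx.
have xin : x \in pblock P x by rewrite mem_pblock cov hx.
have uin : upd x i v \in pblock P x.
  move: xin; rewrite ha !inE => /forallP h; apply/forallP => j; apply/implyP => hj.
  rewrite updE; case: (j =P i) => [e|_]; first by rewrite e hi in hj.
  by move: (h j); rewrite hj.
have ep : pblock P (upd x i v) = pblock P x by apply: def_pblock.
split; last by rewrite ep.
by apply/eqP; rewrite -cov -mem_pblock ep.
Qed.

Lemma c_pos (I : finType) q b c (f : {ffun I -> 'I_q} -> nat) : colI b c f -> 0 < c.
Proof.
move=> [h12 [[x1 hx1] [[x2 hx2] [hb hc]]]].
suff [u [w [huw [hu hw]]]] : exists u w, adjI u w /\ f u = 1 /\ f w = 2.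
  rewrite -(hc w hw) card_gt0; apply/set0Pn; exists u.
  by rewrite inE adjI_sym huw hu eqxx.
move: {2}#|dset x1 x2| (erefl #|dset x1 x2|) => d.
elim: d x1 hx1 => [|d IH] x hx hd.
  have : dset x x2 = set0 by apply/eqP; rewrite -cards_eq0 hd.
  by move/dset0 => e; rewrite e hx2 in hx.
have [i hi] : exists i, i \in dset x x2.
  by apply/set0Pn; rewrite -card_gt0 hd.
have hi' : x2 i != x i by move: hi; rewrite inE eq_sym.
have hadj := adj_upd hi'.
case: (h12 (upd x i (x2 i))) => e.
  apply: (IH _ e).
  have -> : dset (upd x i (x2 i)) x2 = dset x x2 :\ i.
    apply/setP=> j; rewrite !inE updE; case: (j =P i) => [->|_]; first by rewrite eqxx.
    by [].
  by move: hd; rewrite (cardsD1 i) hi add1n => [[]].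
by exists x, (upd x i (x2 i)).
Qed.

Lemma geomE q r : 1 < q -> (q ^ r - 1) %/ (q - 1) = \sum_(i < r) q ^ i.
Proof.
move=> q1; rewrite !subn1 predn_exp.
case: q q1 => [//|[//|p]] _.
by rewrite mulKn.
Qed.

Unset Implicit Arguments.

Lemma keyid (Q n m G d k b c : nat) : 0 < Q -> d * G = Q - 1 -> m + n * d = k * d + b + c ->
  (Q * n + m * G) * d + (b + c) = n * d + k * d * (Q - 1) + Q * (b + c).
Proof.
case: Q => [//|Q'] _; rewrite subSS subn0 => hdG hm.
have e : m * G * d = m * Q' by rewrite -mulnA [G * d]mulnC hdG.
rewrite mulnDl e; nia.
Qed.

Theorem corollary1 (q n b c k : nat) (f : hvert n q -> nat) :
  (1 < q)%N ->
  (exists C : {set hvert q.+1 q}, perfect_code C) ->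
  is_coloring b c f ->
  color1_face_partition k f ->
  (main_eigenvalue n q b c <= (k * (q - 1))%:Z)%R ->
  forall (r : nat) (t : 'I_r -> nat),
    (0 < r)%N ->
    (forall i, 1 <= t i <= q)%N ->
    let T := (\prod_(i < r) t i)%N in
    let lam := main_eigenvalue n q b c in
    forall N : nat,
      (N%:Z = (q ^ r * n)%:Z
              + ((k * (q - 1))%:Z - lam) * ((q ^ r - 1) %/ (q - 1))%:Z)%R ->
      exists (b' c' : nat) (g : hvert N q -> nat),
        is_coloring b' c' g /\
        (b'%:Z = (q ^ r * (b + c))%:Z - (T * c)%:Z)%R /\
        c' = (T * c)%N /\
        main_eigenvalue N q b' c' = (lam + (k * (q - 1) * (q ^ r - 1))%:Z)%R.
Proof.
move=> q1 hC hf hface hlam r t r0 ht T lam N hN.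
have [sg [tu [g1 g3]]] := blockmap_exists q1 hC.
have [S FP] := face_Fprop hface.
have hf' : colI b c f := hf.
have c0 := c_pos hf'.
have hle : n * (q - 1) <= k * (q - 1) + b + c.
  by move: hlam; rewrite /main_eigenvalue; lia.
set m := k * (q - 1) + b + c - n * (q - 1).
have hm : k * q.-1 + b + c = #|'I_n| * q.-1 + m.
  by rewrite card_ord -subn1 /m; lia.
set ts := [seq t i | i <- enum 'I_r].
have hts : all (fun x => 0 < x <= q) ts by apply/allP => x /mapP [i _ ->]; exact: ht i.
have [I [g [b' [c' [hg [hI [hbc hc']]]]]]] := iter q1 g1 g3 hts c0 hf' FP hm.
have sz : size ts = r by rewrite size_map size_enum_ord.
have hT : \prod_(x <- ts) x = T by rewrite /T big_map big_enum.
rewrite sz hT card_ord in hI hbc hc'.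
set G := \sum_(i < r) q ^ i in hI.
have hG : (q ^ r - 1) %/ (q - 1) = G by rewrite geomE.
have em : (((k * (q - 1))%:Z - lam) = m%:Z)%R by rewrite /lam /main_eigenvalue /m; lia.
rewrite em hG in hN.
have hNI : N = #|I|.
  by move: hN; rewrite -PoszM -PoszD hI; case.
have [g' hg'] := @col_transport I 'I_N q b' c' g (etrans (esym hNI) (esym (card_ord N))) hg.
exists b', c', g'; split; first exact: hg'.
split; first by rewrite -hbc hc' PoszD addrK.
split; first by [].
have hdG : (q - 1) * G = q ^ r - 1 by rewrite !subn1 predn_exp.
have Q1 : 1 <= q ^ r by rewrite expn_gt0; lia.
rewrite /lam /main_eigenvalue hNI hI.
move: hdG Q1 hbc; set Q := q ^ r; set d := q - 1 => hdG Q1 hbc.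
have hm0 : m + n * d = k * d + b + c by rewrite /m /d; lia.
have key : (Q * n + m * G) * d + (b + c) = n * d + k * d * (Q - 1) + Q * (b + c).
  exact: keyid.
rewrite hbc; move: key.
set X := (Q * n + m * G) * d; set A := n * d; set C := k * d * (Q - 1); set Y := Q * (b + c).
lia.
Qed.
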